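(* Let $q\ge2$, $n\ge 1$, and ${\boldsymbol y}\in\Sigma_q^{n-1}$ with run length profile $(r_1,\dots,r_{\rho({\boldsymbol y})})$. Then $\mathsf{H}^{\mathsf{In}}_{1\text{-}\mathsf{Del}}({\boldsymbol y})$ is invariant to permutations of the run length profile of ${\boldsymbol y}$ and $$\mathsf{H}^{\mathsf{In}}_{1\text{-}\mathsf{Del}}({\boldsymbol y})=\log_2(nq)-\frac{1}{nq}\sum_{i=1}^{\rho({\boldsymbol y})}(r_i+1)\log_2(r_i+1).$$
   Context: $\Sigma_q=\{0,1,\dots,q-1\}$. For sequences ${\boldsymbol x}$ of length $N$ and ${\boldsymbol y}$ of length $\ell\le N$, $\omega_{{\boldsymbol y}}({\boldsymbol x})$ is the number of index tuples $1\le i_1<\dots<i_\ell\le N$ with $x_{i_j}=y_j$. The $k$-deletion channel with input length $n$ maps ${\boldsymbol x}\in\Sigma_q^n$ to ${\boldsymbol y}\in\Sigma_q^{n-k}$ with probability $\omega_{{\boldsymbol y}}({\boldsymbol x})/\binom nk$. Under uniform transmission $X$ is uniform on $\Sigma_q^n$ and $\mathsf{H}^{\mathsf{In}}_{k\text{-}\mathsf{Del}}({\boldsymbol y})=H(X\mid Y={\boldsymbol y})$ (base-2 logarithms), the posterior being $P({\boldsymbol x}\mid {\boldsymbol y})=\Pr\{{\boldsymbol y}\mid{\boldsymbol x}\}/\sum_{{\boldsymbol x}'}\Pr\{{\boldsymbol y}\mid{\boldsymbol x}'\}$. A run is a maximal block of identical consecutive symbols; $\rho({\boldsymbol y})$ is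 the number of runs and the run length profile is the vector $(r_1,\dots,r_{\rho({\boldsymbol y})})$ of run lengths in order from left to right. *)

(* Defs.v *)
From mathcomp Require Import all_boot.
From Stdlib Require Import Reals.
Set Implicit Arguments. Unset Strict Implicit. Unset Printing Implicit Defensive.

Definition log2 (x : R) : R := (ln x / ln 2)%R.

Definition plogp (p : R) : R :=
  if Req_EM_T p 0 then 0%R else (p * log2 p)%R.

(* omega_y(x): number of index tuples i_1 < ... < i_l with x_{i_j} = y_j,
   encoded bijectively as selection masks m with mask m x = y. *)
Definition omega (q N : nat) (y : seq 'I_q) (x : N.-tuple 'I_q) : nat :=
  #|[set m : N.-tuple bool | mask m x == y]|.

Definition del_prob (q n k : nat) (x : n.-tuple 'I_q) (y : (n - k).-tuple 'I_q) : R :=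
  (INR (omega y x) / INR 'C(n, k))%R.

(* posterior under uniform transmission *)
Definition posterior (q n k : nat) (y : (n - k).-tuple 'I_q) (x : n.-tuple 'I_q) : R :=
  (del_prob x y / \big[Rplus/0%R]_(x' : n.-tuple 'I_q) del_prob x' y)%R.

Definition H_in_del (q n k : nat) (y : (n - k).-tuple 'I_q) : R :=
  (- \big[Rplus/0%R]_(x : n.-tuple 'I_q) plogp (posterior y x))%R.

Fixpoint rl_profile (T : eqType) (s : seq T) : seq nat :=
  match s with
  | [::] => [::]
  | x :: s' =>
      match s' with
      | [::] => [:: 1%N]
      | z :: _ => let r := rl_profile s' in
                  if x == z then (head 0%N r).+1 :: behead r else 1%N :: r
      end
  end.

Definition nruns (T : eqType) (s : seq T) : nat := size (rl_profile s).

(* Main.v *)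
Require Import Defs.
From HB Require Import structures.
From mathcomp Require Import all_boot.
From Stdlib Require Import Reals Lra.
Set Implicit Arguments. Unset Strict Implicit. Unset Printing Implicit Defensive.

HB.instance Definition _ := Monoid.isComLaw.Build R 0%R Rplus (fun a b c => esym (Rplus_assoc a b c)) Rplus_comm Rplus_0_l.

Section Split.
Variables (T : finType) (V : Type) (idx : V) (op : Monoid.com_law idx).
Lemma big_tuple_split N (f : N.+1.-tuple T -> V) :
  \big[op/idx]_(t : N.+1.-tuple T) f t =
  \big[op/idx]_(a : T) \big[op/idx]_(t : N.-tuple T) f [tuple of a :: t].
Proof.
rewrite pair_big /=.
rewrite (reindex (fun p : T * N.-tuple T => [tuple of p.1 :: p.2])) //=.
exists (fun t : N.+1.-tuple T => (thead t, [tuple of behead t])).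
  by case=> a t /= _; congr pair; apply: val_inj.
move=> t _; apply: val_inj => /=.
by case: t => [[|a s] //=].
Qed.
End Split.

Fixpoint cnt (q : nat) (x y : seq 'I_q) : nat :=
  match x with
  | [::] => (y == [::])
  | a :: x' => cnt x' y + (if y is b :: y' then (a == b) * cnt x' y' else 0)
  end.

Lemma omega_sum q N (y : seq 'I_q) (x : N.-tuple 'I_q) :
  omega y x = \sum_(m : N.-tuple bool) (mask m x == y).
Proof.
rewrite /omega cardsE -sum1_card big_mkcond /=.
by apply: eq_bigr => m _; rewrite unfold_in /=; change (eqseq (mask m x) y) with (mask m x == y); case: (_ == _).
Qed.

Lemma omega_cnt q N (y : seq 'I_q) (x : N.-tuple 'I_q) : omega y x = cnt x y.
Proof.
rewrite omega_sum.
elim: N x y => [|N IH] x y.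
  rewrite (tuple0 x) /=.
  rewrite (eq_bigr (fun m : 0.-tuple bool => nat_of_bool (y == [::]))); last first.
    by move=> m _; rewrite (tuple0 m) /= eq_sym.
  by rewrite sum_nat_const card_tuple expn0 mul1n.
case: x => [[|a s] //= Hs].
have Hs' : size s == N by [].
rewrite big_tuple_split big_bool /=.
rewrite -!(IH (Tuple Hs')) /= addnC; congr addn.
  case: y => [|b y'].
    by rewrite big1 // => m _.
  case: eqP => [<-|Hab] /=.
    by rewrite mul1n -(IH (Tuple Hs')); apply: eq_bigr => m _; rewrite eqseq_cons eqxx.
  by rewrite mul0n big1 // => m _; rewrite eqseq_cons; case: eqP.
Qed.

Lemma cnt_small q (x y : seq 'I_q) : size x < size y -> cnt x y = 0.
Proof.
elim: x y => [|a x IH] [|b y] /= H //.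
rewrite (IH (b :: y)) ?(IH y) //; last by apply: ltnW.
by rewrite muln0.
Qed.

Lemma cnt_eq q (x y : seq 'I_q) : size x = size y -> cnt x y = (x == y).
Proof.
elim: x y => [|a x IH] [|b y] //= [H].
rewrite cnt_small ?H // IH // eqseq_cons add0n.
by case: (a == b); case: (x == y).
Qed.

Lemma rl_cons (T : eqType) (c : T) z : exists r t, rl_profile (c :: z) = r :: t.
Proof.
case: z => [|d z] /=; first by exists 1, [::].
case: (rl_profile (d :: z)) => [|r t]; case: (c == d) => /=; eauto.
Qed.

Lemma cnt_head q (b : 'I_q) (y : seq 'I_q) :
  cnt (b :: y) y = head 0 (rl_profile (b :: y)).
Proof.
elim: y b => [|c z IH] b; first by [].
have -> : cnt (b :: c :: z) (c :: z) = cnt (c :: z) (c :: z) + (b == c) * cnt (c :: z) z by [].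
have -> : rl_profile (b :: c :: z) = if b == c then (head 0 (rl_profile (c :: z))).+1 :: behead (rl_profile (c :: z)) else 1 :: rl_profile (c :: z) by [].
rewrite cnt_eq // eqxx IH.
have [r [t ->]] := rl_cons c z.
by case: (b == c); rewrite /= ?mul1n ?mul0n.
Qed.



Lemma iter_Rplus k c : iter k (Rplus c) 0%R = (INR k * c)%R.
Proof.
elim: k => [|k IH] /=; first by rewrite Rmult_0_l.
rewrite IH; case: k {IH} => [|k] /=; ring.
Qed.

Definition RHSd q (F : nat -> R) (y : seq 'I_q) : R :=
  (\big[Rplus/0%R]_(r <- rl_profile y) (F r.+1 - F 1%nat) +
   (INR (q * (size y).+1)%nat - INR (size y)) * F 1%nat)%R.

Lemma rhs_step q (F : nat -> R) (b : 'I_q) (y : seq 'I_q) :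
  RHSd F (b :: y) =
  (F (head 0%nat (rl_profile (b :: y))).+1 - F (head 0%nat (rl_profile (b :: y)))
   + RHSd F y + (INR q - 1) * F 1%nat)%R.
Proof.
rewrite /RHSd.
case: y => [|c z].
  rewrite /= big_cons !big_nil /= !mult_INR !S_INR /=. ring.
have [r [t E]] := rl_cons c z.
have -> : rl_profile (b :: c :: z) = if b == c then (head 0%nat (rl_profile (c :: z))).+1 :: behead (rl_profile (c :: z)) else 1%nat :: rl_profile (c :: z) by [].
rewrite E.
case: (b == c); rewrite !big_cons /=; set k := size z; rewrite !mult_INR !S_INR; ring.
Qed.

Lemma inner q (F : nat -> R) (y0 : seq 'I_q) (g : (size y0).-tuple 'I_q -> nat) :
  \big[Rplus/0%R]_(t : (size y0).-tuple 'I_q) F ((val t == y0) + g t)%nat =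
  (\big[Rplus/0%R]_(t : (size y0).-tuple 'I_q) F (g t) + F (g (in_tuple y0)).+1 - F (g (in_tuple y0)))%R.
Proof.
rewrite (bigD1 (in_tuple y0)) // [in RHS](bigD1 (in_tuple y0)) //= eqxx add1n.
rewrite (eq_bigr (fun t => F (g t))); first ring.
move=> t Ht; congr F.
suff -> : (val t == y0) = false by [].
apply/negbTE; apply: contra Ht => /eqP H; apply/eqP; apply: val_inj.
by [].
Qed.

Lemma sumF q (F : nat -> R) (F0 : F 0%nat = 0%R) (y : seq 'I_q) :
  \big[Rplus/0%R]_(x : (size y).+1.-tuple 'I_q) F (cnt x y) = RHSd F y.
Proof.
elim: y => [|b y IH].
  rewrite /RHSd /= big_nil.
  rewrite (eq_bigr (fun _ => F 1%nat)); last first.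
    by case=> [[|a [|c s]] //= _] _.
  rewrite big_const iter_Rplus card_tuple card_ord expn1 mult_INR /=; ring.
rewrite rhs_step -IH big_tuple_split.
have E a (t : (size y).+1.-tuple 'I_q) :
  cnt (a :: t) (b :: y) = ((val t == b :: y) + (a == b) * cnt t y)%nat.
  by rewrite /= cnt_eq // size_tuple.
under eq_bigr do under eq_bigr do rewrite E.
rewrite -cnt_head (bigD1 b) // eqxx.
rewrite (eq_bigr (fun t : (size (b :: y)).-tuple 'I_q => F ((val t == b :: y) + cnt t y)%nat)); last by move=> t _; rewrite mul1n.
rewrite (inner F (fun t => cnt t y)).
rewrite (eq_bigr (fun _ => F 1%nat)); last first.
  move=> a Hab; rewrite (negbTE Hab).
  rewrite (eq_bigr (fun t : (size (b :: y)).-tuple 'I_q => F ((val t == b :: y) + (fun _ => 0%nat) t)%nat)); last by move=> t _; rewrite mul0n.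
  rewrite (inner F (fun _ => 0%nat)) big1 // F0; ring.
have H1 : \big[Rplus/0%R]_(a < q) F 1%nat = (F 1%nat + \big[Rplus/0%R]_(a : 'I_q | true && (a != b)) F 1%nat)%R.
  by rewrite (bigD1 b).
have H2 : \big[Rplus/0%R]_(a < q) F 1%nat = (INR q * F 1%nat)%R.
  by rewrite big_const iter_Rplus card_ord.
have H3 : cnt (in_tuple (b :: y)) y = cnt (b :: y) y by [].
have H4 : \big[Rplus/0%R]_(a : 'I_q | true && (a != b)) F 1%nat = (INR q * F 1%nat - F 1%nat)%R.
  rewrite -H2 H1; ring.
rewrite H3 H4 IH.
change (RHSd F y + F (cnt (b :: y) y).+1 - F (cnt (b :: y) y) + (INR q * F 1%nat - F 1%nat) = F (cnt (b :: y) y).+1 - F (cnt (b :: y) y) + RHSd F y + (INR q - 1) * F 1%nat)%R.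
ring.
Qed.

Lemma sumF_tuple q m (F : nat -> R) (F0 : F 0%nat = 0%R) (y : m.-tuple 'I_q) :
  \big[Rplus/0%R]_(x : m.+1.-tuple 'I_q) F (cnt x y) = RHSd F y.
Proof.
case: y => s Hs /=; move/eqP: Hs => Hs; subst m; exact: sumF.
Qed.

Lemma big_scale (I : finType) (c : R) (f : I -> R) :
  \big[Rplus/0%R]_(i : I) (c * f i)%R = (c * \big[Rplus/0%R]_(i : I) f i)%R.
Proof.
apply: (big_rec2 (fun a b => a = c * b)%R) => [|i a b _ ->]; ring.
Qed.

Lemma sumn_rl (T : eqType) (s : seq T) : sumn (rl_profile s) = size s.
Proof.
elim: s => [|x s IH] //.
case: s IH => [|z s] IH //.
have -> : rl_profile (x :: z :: s) = if x == z then (head 0%nat (rl_profile (z :: s))).+1 :: behead (rl_profile (z :: s)) else 1%nat :: rl_profile (z :: s) by [].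
have [r [t E]] := rl_cons z s.
rewrite E in IH *; case: (x == z); rewrite /= in IH *; [by rewrite addSn IH | by rewrite IH].
Qed.

Lemma sum_INR_m1 (s : seq nat) :
  \big[Rplus/0%R]_(r <- s) (INR r.+1 - INR 1)%R = INR (sumn s).
Proof.
elim: s => [|r s IH]; first by rewrite big_nil.
rewrite big_cons IH. change (sumn (r :: s)) with (r + sumn s)%nat. rewrite plus_INR S_INR. change (INR 1) with 1%R. ring.
Qed.

Lemma plogp_eq p : plogp p = (p * log2 p)%R.
Proof. rewrite /plogp; case: Req_EM_T => [H|//] /=; subst p; ring. Qed.

Lemma ln2_pos : (0 < ln 2)%R.
Proof. have := ln_lt_2; lra. Qed.

Theorem theorem1 (q n : nat) (hq : (2 <= q)%N) (hn : (1 <= n)%N)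
  (y : (n - 1).-tuple 'I_q) :
  (forall y' : (n - 1).-tuple 'I_q,
      perm_eq (rl_profile y) (rl_profile y') ->
      H_in_del y' = H_in_del y) /\
  H_in_del y =
    (log2 (INR (n * q)) -
     / INR (n * q) *
       \big[Rplus/0%R]_(r <- rl_profile y) (INR r.+1 * log2 (INR r.+1)))%R.
Proof.
case: n hn y => [|m] // _ y.
set N := INR (m.+1 * q).
have Npos : (0 < N)%R.
  apply: lt_0_INR; apply/ltP; rewrite muln_gt0 /=; exact: leq_trans hq.
have hN : N = INR (m.+1 * q) by [].
clearbody N.
pose g := fun c : nat => (INR c * log2 (INR c))%R.
have key : forall y0 : (m.+1 - 1).-tuple 'I_q,
    @H_in_del q m.+1 1 y0 = (log2 N - / N * \big[Rplus/0%R]_(r <- rl_profile y0) g r.+1)%R.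
  move=> y0.
  have Hs : size y0 == m by rewrite size_tuple subn1.
  pose y1 : m.-tuple 'I_q := Tuple Hs.
  have sumw : \big[Rplus/0%R]_(x : m.+1.-tuple 'I_q) INR (cnt x y0) = N.
    rewrite (@sumF_tuple q m INR _ y1) // /RHSd sum_INR_m1 sumn_rl size_tuple hN.
    rewrite !mult_INR; change (INR 1) with 1%R; ring.
  have sumd : \big[Rplus/0%R]_(x : m.+1.-tuple 'I_q) del_prob x y0 = (N * / INR m.+1)%R.
    rewrite /del_prob bin1.
    rewrite (eq_bigr (fun x : m.+1.-tuple 'I_q => (/ INR m.+1 * INR (cnt x y0))%R)); last first.
      by move=> x _; rewrite omega_cnt /Rdiv Rmult_comm.
    rewrite big_scale sumw; ring.
  have post : forall x, posterior y0 x = (INR (cnt x y0) / N)%R.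
    move=> x; rewrite /posterior sumd /del_prob bin1 omega_cnt.
    have : (0 < INR m.+1)%R by apply: lt_0_INR; apply/ltP.
    move=> Hm; field; lra.
  have pt : forall x, plogp (posterior y0 x) =
      (/ N * g (cnt x y0) + (- (log2 N / N)) * INR (cnt x y0))%R.
    move=> x; rewrite post plogp_eq /g.
    case E: (cnt x y0) => [|c].
      rewrite /=; field; lra.
    have Hc : (0 < INR c.+1)%R by apply: lt_0_INR; apply/ltP.
    rewrite /log2 /Rdiv ln_mult ?ln_Rinv //; last by apply: Rinv_0_lt_compat.
    have := ln2_pos; move=> H2; field; lra.
  rewrite /H_in_del (eq_bigr _ (fun x _ => pt x)) big_split /= !big_scale sumw.
  rewrite (@sumF_tuple q m g _ y1); last by rewrite /g /= Rmult_0_l.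
  have g1 : g 1%nat = 0%R by rewrite /g /log2 /= ln_1; field; have := ln2_pos; lra.
  rewrite /RHSd g1 Rmult_0_r Rplus_0_r.
  rewrite (eq_bigr (fun r => g r.+1)); last by move=> r _; rewrite Rminus_0_r.
  have -> : rl_profile y1 = rl_profile y0 by [].
  rewrite /Rdiv; field; lra.
split.
  move=> y' Hp; rewrite !key; congr (_ - _ * _)%R.
  by apply: perm_big; rewrite perm_sym.
by rewrite key.
Qed.
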